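(* Let $R$ be a commutative ring, $n\ge 1$, and let $\varphi$ be an invertible alternating $2n\times 2n$ matrix with entries in $R$, regarded also as a matrix over the polynomial ring $R[X]$. Then $${\rm E}_{\varphi}(R[X],(X))={\rm E}_{\varphi}(R[X])\cap {\rm GL}_{2n-1}(R[X],(X)).$$
   Context: All rings are commutative with identity. Elements of $R^{m}$ are row vectors; ${}^t$ denotes transpose. A square matrix is alternating if it has the form $\nu-\nu^t$. For an invertible alternating $2n\times 2n$ matrix $\varphi$ over a ring $S$, write $\varphi=\begin{pmatrix}0&-c\\ c^t&\nu\end{pmatrix}$, $\varphi^{-1}=\begin{pmatrix}0&d\\ -d^t&\mu\end{pmatrix}$ with $c,d\in S^{2n-1}$, and for $v\in S^{2n-1}$ set $\alpha_\varphi(v)=I_{2n-1}+d^tv\nu$, $\beta_\varphi(v)=I_{2n-1}+\mu v^tc$. ${\rm E}_\varphi(S)$ is the subgroup of ${\rm GL}_{2n-1}(S)$ generated by all $\alpha_\varphi(v),\beta_\varphi(v)$, $v\in S^{2n-1}$. For an ideal $J$ of $S$, ${\rm E}_\varphi(J)$ is the subgroup generated by $\alpha_\varphi(v),\beta_\varphi(v)$ with $v\in J^{2n-1}$, and ${\rm E}_\varphi(S,J)$ is the normal closure of ${\rm E}_\varphi(J)$ in ${\rm E}_\varphi(S)$. Here $S=R[X]$, $J=(X)$, and ${\rm GL}_{2n-1}(R[X],(X))$ is the group of invertible matrices over $R[X]$ congruent to the identity modulo $(X)$ (i.e. equal to the identity after setting $X=0$). *)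

(* Defs.v *)
From HB Require Import structures.
From mathcomp Require Import all_boot all_order all_algebra.
Set Implicit Arguments. Unset Strict Implicit. Unset Printing Implicit Defensive.
Import GRing.Theory.
Local Open Scope ring_scope.

Definition mx_inverse (S : comRingType) (k : nat) (A B : 'M[S]_k) : Prop :=
  A *m B = 1%:M /\ B *m A = 1%:M.

Definition mx_invertible (S : comRingType) (k : nat) (A : 'M[S]_k) : Prop :=
  exists B, mx_inverse A B.

(* Subgroup of GL_k(S) generated by a set G of matrices (intended to be
   invertible): the smallest set containing 1 and closed under left
   multiplication by generators and by inverses of generators. *)
Inductive gen_group (S : comRingType) (k : nat) (G : 'M[S]_k -> Prop)
  : 'M[S]_k -> Prop :=
| gen_group1 : gen_group G 1%:M
| gen_groupM g A : G g -> gen_group G A -> gen_group G (g *m A)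
| gen_groupV g g' A : G g -> mx_inverse g g' -> gen_group G A ->
    gen_group G (g' *m A).

Definition alternating (S : comRingType) (m : nat) (phi : 'M[S]_m) : Prop :=
  exists nu : 'M[S]_m, phi = nu - nu^T.

Section Ephi.
(* phi is invertible with inverse psi (hypothesis mx_inverse phi psi is
   assumed wherever these definitions are used). *)
Variables (S : comRingType) (k : nat) (phi psi : 'M[S]_(1 + k)).

(* phi = [[0, -c], [c^t, nu]],  phi^-1 = psi = [[0, d], [-d^t, mu]] *)
Definition phi_c : 'rV[S]_k := - ursubmx phi.
Definition phi_nu : 'M[S]_k := drsubmx phi.
Definition phi_d : 'rV[S]_k := ursubmx psi.
Definition phi_mu : 'M[S]_k := drsubmx psi.

Definition alpha_phi (v : 'rV[S]_k) : 'M[S]_k := 1%:M + (phi_d^T *m v) *m phi_nu.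
Definition beta_phi (v : 'rV[S]_k) : 'M[S]_k := 1%:M + (phi_mu *m v^T) *m phi_c.

Definition Ephi_gens (J : S -> Prop) (M : 'M[S]_k) : Prop :=
  exists v : 'rV[S]_k, (forall j, J (v 0 j)) /\ (M = alpha_phi v \/ M = beta_phi v).

Definition Ephi_ideal (J : S -> Prop) : 'M[S]_k -> Prop := gen_group (Ephi_gens J).

Definition Ephi : 'M[S]_k -> Prop := Ephi_ideal (fun _ => True).

(* E_phi(S, J): normal closure of E_phi(J) in E_phi(S), i.e. the subgroup
   generated by all conjugates h g h^-1, h in E_phi(S), g in E_phi(J). *)
Definition Ephi_rel (J : S -> Prop) : 'M[S]_k -> Prop :=
  gen_group (fun M => exists h h' g,
     Ephi h /\ mx_inverse h h' /\ Ephi_ideal J g /\ M = h *m g *m h').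

End Ephi.

Definition idealX (R : comRingType) (p : {poly R}) : Prop :=
  exists q : {poly R}, p = 'X * q.

Definition GL_X (R : comRingType) (k : nat) (M : 'M[{poly R}]_k) : Prop :=
  mx_invertible M /\ map_mx (fun p : {poly R} => p.[0]) M = 1%:M.

(* Main.v *)
Require Import Defs.
From HB Require Import structures.
From mathcomp Require Import all_boot all_order all_algebra.
Set Implicit Arguments. Unset Strict Implicit. Unset Printing Implicit Defensive.
Import GRing.Theory.
Local Open Scope ring_scope.

Section Gen.
Variables (S : comRingType) (k : nat).
Implicit Types (G : 'M[S]_k -> Prop) (A B C : 'M[S]_k).

Lemma inv_uniq A B C : mx_inverse A B -> mx_inverse A C -> B = C.
Proof.
move=> [h1 h2] [h3 h4].
by rewrite -[B]mulmx1 -h3 mulmxA h2 mul1mx.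
Qed.

Lemma gg_mul G A B : gen_group G A -> gen_group G B -> gen_group G (A *m B).
Proof.
elim=> [|g A' Gg _ IH|g g' A' Gg hg _ IH] hB.
- by rewrite mul1mx.
- by rewrite -mulmxA; apply: gen_groupM => //; apply: IH.
- by rewrite -mulmxA; apply: gen_groupV hg _ => //; apply: IH.
Qed.

Lemma gg_gen G g : G g -> gen_group G g.
Proof. by move=> Gg; rewrite -[g]mulmx1; apply: gen_groupM => //; apply: gen_group1. Qed.

Lemma gg_genV G g g' : G g -> mx_inverse g g' -> gen_group G g'.
Proof. by move=> Gg hg; rewrite -[g']mulmx1; apply: gen_groupV hg _ => //; apply: gen_group1. Qed.

Lemma mx_inverse_mul A A' B B' :
  mx_inverse A A' -> mx_inverse B B' -> mx_inverse (A *m B) (B' *m A').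
Proof.
move=> [a1 a2] [b1 b2]; split.
- by rewrite mulmxA -(mulmxA A) b1 mulmx1 a1.
- by rewrite mulmxA -(mulmxA B') a2 mulmx1 b2.
Qed.

Lemma conj_inv (h h' g gi : 'M[S]_k) : mx_inverse h h' -> mx_inverse g gi ->
  mx_inverse (h *m g *m h') (h *m gi *m h').
Proof.
case=> a1 a2 [b1 b2]; split.
- by rewrite -!mulmxA (mulmxA h') a2 mul1mx (mulmxA g) b1 mul1mx a1.
- by rewrite -!mulmxA (mulmxA h') a2 mul1mx (mulmxA gi) b2 mul1mx a1.
Qed.

Lemma mx_inverse_sym A B : mx_inverse A B -> mx_inverse B A.
Proof. by move=> [h1 h2]; split. Qed.

Lemma gg_inv G : (forall g, G g -> exists g', mx_inverse g g') ->
  forall A, gen_group G A -> exists B, mx_inverse A B /\ gen_group G B.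
Proof.
move=> hG A; elim=> [|g A' Gg _ [B [hB gB]]|g g' A' Gg hg _ [B [hB gB]]].
- by exists 1%:M; split; [split; rewrite mulmx1|apply: gen_group1].
- have [g' hg] := hG g Gg.
  exists (B *m g'); split; first exact: mx_inverse_mul.
  by apply: gg_mul => //; apply: gg_genV hg.
- exists (B *m g); split.
    by apply: mx_inverse_mul => //; apply: mx_inverse_sym.
  by apply: gg_mul => //; apply: gg_gen.
Qed.

Lemma gg_sub G (H : 'M[S]_k -> Prop) :
  H 1%:M -> (forall A B, H A -> H B -> H (A *m B)) ->
  (forall g, G g -> H g) -> (forall g g', G g -> mx_inverse g g' -> H g') ->
  forall A, gen_group G A -> H A.
Proof.
move=> h1 hM hG hV A; elim=> //.
- by move=> g A' Gg _ IH; apply: hM => //; apply: hG.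
- by move=> g g' A' Gg hg _ IH; apply: hM => //; apply: hV hg.
Qed.

End Gen.

Section Alg.
Variables (S : comRingType) (k : nat) (phi psi : 'M[S]_(1 + k)).
Hypotheses (halt : alternating phi) (hinv : mx_inverse phi psi).

Lemma tr11 (x : 'M[S]_1) : x^T = x.
Proof. by apply/matrixP => i j; rewrite !ord1 mxE. Qed.

Lemma blocks_phi :
  [/\ ulsubmx phi = 0, dlsubmx phi = (phi_c phi)^T,
      (forall x : 'rV[S]_k, x *m phi_nu phi *m x^T = 0) &
      (phi_nu phi)^T = - phi_nu phi].
Proof.
case: halt => N ->; split.
- by apply/matrixP => i j; rewrite !ord1 !mxE subrr.
- by apply/matrixP => i j; rewrite /phi_c !mxE opprB.
- move=> x.
  have -> : phi_nu (N - N^T) = drsubmx N - (drsubmx N)^T.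
    by apply/matrixP => i j; rewrite /phi_nu !mxE.
  rewrite mulmxBr mulmxBl.
  have -> : x *m (drsubmx N)^T *m x^T = (x *m drsubmx N *m x^T)^T.
    by rewrite !trmx_mul trmxK mulmxA.
  by rewrite tr11 subrr.
- by apply/matrixP => i j; rewrite /phi_nu !mxE opprB.
Qed.

Lemma key_rel : phi_nu phi *m (phi_d psi)^T = 0 /\ phi_c phi *m phi_mu psi = 0.
Proof.
have [ul0 dlc xnux nuT] := blocks_phi.
case: hinv => h1 h2.
have e1 := h1; rewrite -[phi]submxK -[psi]submxK mulmx_block scalar_mx_block in e1.
case/eq_block_mx: e1 => _ ur1 _ _.
have e2 := h2; rewrite -[phi]submxK -[psi]submxK mulmx_block scalar_mx_block in e2.
case/eq_block_mx: e2 => ul2 ur2 _ _.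
move: ur1; rewrite ul0 mul0mx add0r => ur1.
split; last by rewrite /phi_c /phi_mu mulNmx; apply/eqP; rewrite oppr_eq0; apply/eqP; exact: ur1.
rewrite dlc ul0 mulmx0 add0r in ul2.
have dnu : phi_d psi *m phi_nu phi = ulsubmx psi *m phi_c phi.
  by rewrite /phi_c mulmxN; apply/eqP; rewrite -addr_eq0 addrC ur2.
have cd : phi_c phi *m (phi_d psi)^T = 1%:M.
  by rewrite -[LHS]tr11 trmx_mul trmxK; exact: ul2.
have ul0' : ulsubmx psi = 0.
  by rewrite -[ulsubmx psi]mulmx1 -cd mulmxA -dnu xnux.
have dnu0 : phi_d psi *m phi_nu phi = 0 by rewrite dnu ul0' mul0mx.
apply/eqP; rewrite -oppr_eq0 -mulNmx -nuT -trmx_mul dnu0.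
by apply/eqP/matrixP => i j; rewrite !mxE.
Qed.
Lemma alpha_add v w : alpha_phi phi psi v *m alpha_phi phi psi w = alpha_phi phi psi (v + w).
Proof.
have [nuD _] := key_rel.
rewrite /alpha_phi mulmxDl !mulmxDr !mul1mx !mulmx1.
have -> : (phi_d psi)^T *m v *m phi_nu phi *m ((phi_d psi)^T *m w *m phi_nu phi) = 0.
  by rewrite !mulmxA -(mulmxA _ (phi_nu phi)) nuD mulmx0 !mul0mx.
by rewrite addr0 addrAC mulmxDl addrA.
Qed.

Lemma beta_add v w : beta_phi phi psi v *m beta_phi phi psi w = beta_phi phi psi (v + w).
Proof.
have [_ cmu] := key_rel.
rewrite /beta_phi mulmxDl !mulmxDr !mul1mx !mulmx1.
have -> : phi_mu psi *m v^T *m phi_c phi *m (phi_mu psi *m w^T *m phi_c phi) = 0.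
  by rewrite !mulmxA -(mulmxA _ (phi_c phi)) cmu mulmx0 !mul0mx.
by rewrite addr0 linearD /= mulmxDr mulmxDl addrAC addrA.
Qed.

Lemma alpha0 : alpha_phi phi psi 0 = 1%:M.
Proof. by rewrite /alpha_phi mulmx0 mul0mx addr0. Qed.

Lemma beta0 : beta_phi phi psi 0 = 1%:M.
Proof. by rewrite /beta_phi trmx0 mulmx0 mul0mx addr0. Qed.

Lemma alpha_inv v : mx_inverse (alpha_phi phi psi v) (alpha_phi phi psi (- v)).
Proof. by split; rewrite alpha_add ?subrr ?addNr alpha0. Qed.

Lemma beta_inv v : mx_inverse (beta_phi phi psi v) (beta_phi phi psi (- v)).
Proof. by split; rewrite beta_add ?subrr ?addNr beta0. Qed.

End Alg.

Section Main.
Variables (R : comRingType) (k : nat) (phi psi : 'M[R]_(1 + k)).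
Hypotheses (halt : alternating phi) (hinv : mx_inverse phi psi).

Local Notation P := (map_mx polyC phi).
Local Notation Q := (map_mx polyC psi).

Definition ev m n (M : 'M[{poly R}]_(m, n)) : 'M[R]_(m, n) := map_mx (horner_eval 0) M.
Definition Cm m n (M : 'M[{poly R}]_(m, n)) : 'M[{poly R}]_(m, n) := map_mx polyC (ev M).

Lemma altP : alternating P.
Proof.
case: halt => N ->; exists (map_mx polyC N).
by apply/matrixP => i j; rewrite !mxE rmorphB.
Qed.

Lemma invP : mx_inverse P Q.
Proof. by case: hinv => h1 h2; split; rewrite -map_mxM ?h1 ?h2 map_mx1. Qed.

Lemma ev_mul m n p (A : 'M_(m, n)) (B : 'M_(n, p)) : ev (A *m B) = ev A *m ev B.
Proof. exact: map_mxM. Qed.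

Lemma Cm_mul m n p (A : 'M_(m, n)) (B : 'M_(n, p)) : Cm (A *m B) = Cm A *m Cm B.
Proof. by rewrite /Cm ev_mul map_mxM. Qed.

Lemma Cm_add m n (A B : 'M_(m, n)) : Cm (A + B) = Cm A + Cm B.
Proof. by rewrite /Cm /ev !map_mxD. Qed.

Lemma Cm_1 : Cm (1%:M : 'M_k) = 1%:M.
Proof. by rewrite /Cm /ev !map_mx1. Qed.

Lemma ev_1 : ev (1%:M : 'M_k) = 1%:M.
Proof. by rewrite /ev map_mx1. Qed.

Lemma Cm_const m n (A : 'M[R]_(m, n)) : Cm (map_mx polyC A) = map_mx polyC A.
Proof. by apply/matrixP => i j; rewrite !mxE /= horner_evalE hornerC. Qed.

Lemma Cm_alpha v : Cm (alpha_phi P Q v) = alpha_phi P Q (Cm v).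
Proof.
rewrite /alpha_phi Cm_add Cm_1 !Cm_mul /phi_d /phi_nu.
by rewrite -map_ursubmx -map_drsubmx map_trmx !Cm_const.
Qed.

Lemma Cm_beta v : Cm (beta_phi P Q v) = beta_phi P Q (Cm v).
Proof.
rewrite /beta_phi Cm_add Cm_1 !Cm_mul /phi_mu /phi_c.
rewrite -map_ursubmx -map_drsubmx -map_mxN !Cm_const; congr (_ + _ *m _ *m _).
by rewrite /Cm /ev map_trmx; apply/matrixP => i j; rewrite !mxE.
Qed.

Lemma Cm_idem m n (v : 'M_(m, n)) : Cm (Cm v) = Cm v.
Proof. exact: Cm_const. Qed.

Lemma Cm_ideal (v : 'rV[{poly R}]_k) : (forall j, idealX (v 0 j)) -> Cm v = 0.
Proof.
move=> hv; apply/matrixP => i j; rewrite !ord1 !mxE /=.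
have [q ->] := hv j.
by rewrite horner_evalE mulrC hornerMX mulr0.
Qed.

Lemma ideal_sub (v : 'rV[{poly R}]_k) : forall j, idealX ((v - Cm v) 0 j).
Proof.
move=> j; rewrite !mxE /=.
rewrite horner_evalE.
have /factor_theorem [q hq] : root (v 0 j - (v 0 j).[0]%:P) 0.
  by rewrite /root hornerD hornerN hornerC subrr.
by exists q; rewrite hq subr0 mulrC.
Qed.


Local Notation E := (Ephi P Q).
Local Notation EJ := (Ephi_ideal P Q (@idealX R)).
Local Notation Erel := (Ephi_rel P Q (@idealX R)).

Lemma gens_inv J g : Ephi_gens P Q J g -> exists g', mx_inverse g g'.
Proof.
case=> v [_ [->|->]].
- by exists (alpha_phi P Q (- v)); apply: alpha_inv altP invP v.
- by exists (beta_phi P Q (- v)); apply: beta_inv altP invP v.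
Qed.

Lemma gg_mono (G1 G2 : 'M[{poly R}]_k -> Prop) :
  (forall g, G1 g -> G2 g) -> forall A, gen_group G1 A -> gen_group G2 A.
Proof.
move=> h12; apply: gg_sub.
- exact: gen_group1.
- exact: gg_mul.
- by move=> g /h12; apply: gg_gen.
- by move=> g g' /h12 Gg hg; apply: gg_genV hg.
Qed.

Lemma EJ_E g : EJ g -> E g.
Proof. by apply: gg_mono => M [v [_ hv]]; exists v. Qed.

Lemma E_inv h : E h -> exists h', mx_inverse h h' /\ E h'.
Proof. by apply: gg_inv => g; apply: gens_inv. Qed.

Lemma EJ_inv g : EJ g -> exists g', mx_inverse g g' /\ EJ g'.
Proof. by apply: gg_inv => g0; apply: gens_inv. Qed.

Lemma Cm_inv1 (g g' : 'M_k) : mx_inverse g g' -> Cm g = 1%:M -> Cm g' = 1%:M.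
Proof. by case=> _ h2 hg; rewrite -[Cm g']mulmx1 -hg -Cm_mul h2 Cm_1. Qed.

Lemma Cm_EJ g : EJ g -> Cm g = 1%:M.
Proof.
move=> hgJ; apply: (@gg_sub _ _ _ (fun A => Cm A = 1%:M) _ _ _ _ _ hgJ).
- exact: Cm_1.
- by move=> A B hA hB; rewrite Cm_mul hA hB mulmx1.
- by move=> g0 [v [hv [->|->]]]; rewrite ?Cm_alpha ?Cm_beta Cm_ideal // ?alpha0 ?beta0.
- move=> g0 g0' [v [hv [->|->]]] hg; apply: (Cm_inv1 hg);
  by rewrite ?Cm_alpha ?Cm_beta Cm_ideal // ?alpha0 ?beta0.
Qed.

Lemma relgen_inv M : (exists h h' g, E h /\ mx_inverse h h' /\ EJ g /\ M = h *m g *m h') ->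
  exists M', mx_inverse M M' /\ E M' /\ Cm M' = 1%:M.
Proof.
case=> h [h' [g [Eh [hh [EJg ->]]]]].
have [gi [hgi EJgi]] := EJ_inv EJg.
have [h'' [hh'' Eh'']] := E_inv Eh.
have eh : h' = h'' by apply: inv_uniq hh hh''.
exists (h *m gi *m h'); split; [|split].
- exact: conj_inv.
- by apply: gg_mul; [apply: gg_mul => //; apply: EJ_E|rewrite eh].
- rewrite !Cm_mul (Cm_inv1 hgi (Cm_EJ EJg)) mulmx1 -Cm_mul.
  by case: hh => -> _; rewrite Cm_1.
Qed.

Lemma relgen_prop M : (exists h h' g, E h /\ mx_inverse h h' /\ EJ g /\ M = h *m g *m h') ->
  E M /\ Cm M = 1%:M.
Proof.
move=> hM; have [M' [hMM' [_ CM']]] := relgen_inv hM.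
split; last by apply: (Cm_inv1 (mx_inverse_sym hMM') CM').
case: hM => h [h' [g [Eh [hh [EJg ->]]]]].
have [h'' [hh'' Eh'']] := E_inv Eh.
have eh : h' = h'' by apply: inv_uniq hh hh''.
by apply: gg_mul; [apply: gg_mul => //; apply: EJ_E|rewrite eh].
Qed.

Lemma rel_forward M : Erel M -> E M /\ Cm M = 1%:M /\ mx_invertible M.
Proof.
move=> hM; split; last split.
- apply: (@gg_sub _ _ _ E _ _ _ _ _ hM).
  + exact: gen_group1.
  + exact: gg_mul.
  + by move=> g /relgen_prop [].
  + move=> g g' hg hgg'; have [M' [hM' [EM' _]]] := relgen_inv hg.
    by rewrite (inv_uniq hgg' hM').
- apply: (@gg_sub _ _ _ (fun A => Cm A = 1%:M) _ _ _ _ _ hM).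
  + exact: Cm_1.
  + by move=> A B hA hB; rewrite Cm_mul hA hB mulmx1.
  + by move=> g /relgen_prop [].
  + move=> g g' hg hgg'; have [M' [hM' [_ CM']]] := relgen_inv hg.
    by rewrite (inv_uniq hgg' hM').
- have [B [hB _]] : exists B, mx_inverse M B /\ Erel B.
    apply: gg_inv hM => g hg; have [M' [hM' _]] := relgen_inv hg; by exists M'.
  by exists B.
Qed.

Definition QP (M : 'M[{poly R}]_k) := forall h h', E h -> mx_inverse h h' ->
  exists N, Erel N /\ h *m M = N *m h *m Cm M.

Lemma step g g0 g1' A : g = Cm g *m g0 -> E (Cm g) -> mx_inverse (Cm g) g1' ->
  EJ g0 -> QP A -> QP (g *m A).
Proof.
move=> eg ECg hCg EJg0 IH h h' Eh hh.
have [N [EN eN]] := IH (h *m Cm g) (g1' *m h') (gg_mul Eh ECg) (mx_inverse_mul hh hCg).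
have hi := mx_inverse_mul hh hCg.
exists ((h *m Cm g) *m g0 *m (g1' *m h') *m N); split.
  apply: gen_groupM => //.
  by exists (h *m Cm g), (g1' *m h'), g0; split; [apply: gg_mul|split].
rewrite Cm_mul.
have hi2 : (g1' *m h') *m (h *m Cm g) = 1%:M by case: hi.
transitivity ((h *m Cm g) *m g0 *m (g1' *m h') *m ((h *m Cm g) *m A)).
  rewrite -(mulmxA _ (g1' *m h') _) (mulmxA (g1' *m h')) hi2 mul1mx {1}eg.
  by rewrite !mulmxA.
by rewrite eN !mulmxA.
Qed.

Lemma QP_alpha v A : QP A -> QP (alpha_phi P Q v *m A).
Proof.
apply: (step (g0 := alpha_phi P Q (v - Cm v)) (g1' := alpha_phi P Q (- Cm v))).
- by rewrite Cm_alpha (alpha_add altP invP) addrC subrK.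
- by rewrite Cm_alpha; apply: gg_gen; exists (Cm v); split => //; left.
- by rewrite Cm_alpha; apply: alpha_inv altP invP _.
- by apply: gg_gen; exists (v - Cm v); split; [apply: ideal_sub|left].
Qed.

Lemma QP_beta v A : QP A -> QP (beta_phi P Q v *m A).
Proof.
apply: (step (g0 := beta_phi P Q (v - Cm v)) (g1' := beta_phi P Q (- Cm v))).
- by rewrite Cm_beta (beta_add altP invP) addrC subrK.
- by rewrite Cm_beta; apply: gg_gen; exists (Cm v); split => //; right.
- by rewrite Cm_beta; apply: beta_inv altP invP _.
- by apply: gg_gen; exists (v - Cm v); split; [apply: ideal_sub|right].
Qed.

Lemma QP_all M : E M -> QP M.
Proof.
elim=> [|g A Gg _ IH|g g' A Gg hg _ IH].
- move=> h h' _ _; exists 1%:M; split; first exact: gen_group1.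
  by rewrite /Cm /ev !map_mx1 !mulmx1 mul1mx.
- case: Gg => v [_ [->|->]]; [exact: QP_alpha|exact: QP_beta].
- case: Gg hg => v [_ [->|->]] hg.
  + by rewrite (inv_uniq hg (alpha_inv altP invP v)); apply: QP_alpha.
  + by rewrite (inv_uniq hg (beta_inv altP invP v)); apply: QP_beta.
Qed.

Lemma ev_Cm (A : 'M_k) : ev (Cm A) = ev A.
Proof. by apply/matrixP => i j; rewrite !mxE /= !horner_evalE hornerC. Qed.

Lemma main_k (M : 'M[{poly R}]_k) : Erel M <-> (E M /\ GL_X M).
Proof.
split.
- move=> /rel_forward [EM [CM inv]]; split => //; split => //.
  by rewrite -[map_mx _ M]/(ev M) -ev_Cm CM ev_1.
- case=> EM [_ evM].
  have evM' : ev M = 1%:M by exact: evM.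
  have [N [EN eN]] := QP_all EM (gen_group1 _) (conj (mulmx1 1%:M) (mulmx1 1%:M)).
  have CM : Cm M = 1%:M by rewrite /Cm evM' map_mx1.
  by move: eN; rewrite CM !mulmx1 mul1mx => ->.
Qed.

End Main.

Theorem lemma3p8 (R : comRingType) (n : nat) (hn : (0 < n)%N)
  (phi psi : 'M[R]_(1 + (n.*2).-1))
  (halt : alternating phi) (hinv : mx_inverse phi psi) :
  forall M : 'M[{poly R}]_((n.*2).-1),
    Ephi_rel (map_mx polyC phi) (map_mx polyC psi) (@idealX R) M <->
    (Ephi (map_mx polyC phi) (map_mx polyC psi) M /\ GL_X M).
Proof. by move=> M; apply: main_k. Qed.
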